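(* Let $r$ and $k$ be integers with $1 \le k \le r$. There exists $n_0 = n_0(r,k)$ such that for every $n \ge n_0$ the following holds. Let $\mathcal{H}$ be an intersecting $r$-uniform hypergraph on $n$ vertices with minimum positive co-degree $\delta_{r-1}^+(\mathcal{H}) \ge k$, and suppose $\mathcal{H}$ has the maximum number of hyperedges among all intersecting $r$-uniform $n$-vertex hypergraphs with minimum positive co-degree at least $k$. Then $\mathcal{H}$ is a $k$-kernel system.
   Context: A hypergraph is intersecting if every two of its hyperedges share at least one vertex. For a non-empty $r$-uniform hypergraph $\mathcal{H}$, the minimum positive co-degree $\delta_{r-1}^+(\mathcal{H})$ is the largest integer $k$ such that every $(r-1)$-set of vertices that is contained in at least one hyperedge of $\mathcal{H}$ is contained in at least $k$ distinct hyperedges of $\mathcal{H}$; for the empty hypergraph it is defined to be $0$. Given integers $r \ge k \ge 1$, an $r$-uniform $k$-kernel system on vertex set $V$ is a hypergraph whose hyperedge set is $\{E \in \binom{V}{r} : |E \cap X| \ge k\}$ for some distinguished set $X \subseteq V$ with $|X| = 2k-1$ (the kernel). *)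

(* Defs.v *)
From mathcomp Require Import all_boot.
Set Implicit Arguments. Unset Strict Implicit. Unset Printing Implicit Defensive.

Definition uniform (n r : nat) (H : {set {set 'I_n}}) : bool :=
  [forall E in H, #|E| == r].

Definition intersecting (n : nat) (H : {set {set 'I_n}}) : bool :=
  [forall E in H, forall F in H, E :&: F != set0].

Definition codeg (n : nat) (H : {set {set 'I_n}}) (S : {set 'I_n}) : nat :=
  #|[set E in H | S \subset E]|.

(* The seed #|H| of the min is harmless since codeg <= #|H|. *)
Definition min_pos_codeg (n r : nat) (H : {set {set 'I_n}}) : nat :=
  if H == set0 then 0
  else \big[minn/#|H|]_(S : {set 'I_n} | (#|S| == r.-1) && (0 < codeg H S))
          codeg H S.

Definition kernel_system (n r k : nat) (H : {set {set 'I_n}}) : Prop :=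
  exists X : {set 'I_n}, #|X| = (2 * k).-1 /\
    H = [set E : {set 'I_n} | (#|E| == r) && (k <= #|E :&: X|)].

(* Main.v *)
Require Import Defs.
From mathcomp Require Import all_boot zify.
Set Implicit Arguments. Unset Strict Implicit. Unset Printing Implicit Defensive.

Lemma one_more (T : finType) (S F : {set T}) :
  S \subset F -> #|F| = #|S|.+1 -> exists2 v, v \notin S & F = v |: S.
Proof.
move=> sSF cF.
have : #|F :\: S| = 1.
  by rewrite cardsD (setIidPr sSF) cF subSnn.
move/eqP/cards1P=> [v ev].
have vF : v \in F :\: S by rewrite ev set11.
move: vF; rewrite inE => /andP[vS vF].
exists v => //.
apply/setP=> y; rewrite !inE.
case: (boolP (y \in S)) => yS; first by rewrite orbT (subsetP sSF).
rewrite orbF.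
have: (y \in F :\: S) = (y == v) by rewrite ev inE.
by rewrite inE yS.
Qed.

Lemma ext_sub (T : finType) (S Z : {set T}) (FF : {set {set T}}) :
  (forall F, F \in FF -> S \subset F /\ #|F| = #|S|.+1) ->
  (forall v, v \notin S -> v |: S \in FF -> v \in Z) ->
  FF \subset (fun v => v |: S) @: Z.
Proof.
move=> h1 h2; apply/subsetP=> F FF_F.
have [sSF cF] := h1 F FF_F.
have [v vS eF] := one_more sSF cF.
apply/imsetP; exists v => //; apply: h2 => //; by rewrite -eF.
Qed.

Lemma ext_le (T : finType) (S Z : {set T}) (FF : {set {set T}}) :
  (forall F, F \in FF -> S \subset F /\ #|F| = #|S|.+1) ->
  (forall v, v \notin S -> v |: S \in FF -> v \in Z) ->
  #|FF| <= #|Z|.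
Proof.
move=> h1 h2; apply: leq_trans (subset_leq_card (ext_sub h1 h2)) _.
exact: leq_imset_card.
Qed.

Lemma ext_full (T : finType) (S Z : {set T}) (FF : {set {set T}}) :
  (forall F, F \in FF -> S \subset F /\ #|F| = #|S|.+1) ->
  (forall v, v \notin S -> v |: S \in FF -> v \in Z) ->
  #|Z| <= #|FF| -> forall z, z \in Z -> z |: S \in FF.
Proof.
move=> h1 h2 hc z zZ.
have sub := ext_sub h1 h2.
have e : FF = (fun v => v |: S) @: Z.
  apply/eqP; rewrite eqEcard sub /=.
  exact: leq_trans (leq_imset_card _ _) hc.
by rewrite e; apply: imset_f.
Qed.

Lemma card_bigcup_le (I T : finType) (P : pred I) (F : I -> {set T}) :
  #|\bigcup_(i | P i) F i| <= \sum_(i | P i) #|F i|.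
Proof.
elim/big_rec2: _ => [|i A m Pi le]; first by rewrite cards0.
by rewrite (leq_trans (leq_card_setU _ _)) // leq_add2l.
Qed.

Lemma bigmin_le (I : finType) (P : pred I) (F : I -> nat) x i :
  P i -> \big[minn/x]_(j | P j) F j <= F i.
Proof.
move=> Pi; have : i \in index_enum I by rewrite mem_index_enum.
elim: (index_enum I) => // a s IH; rewrite inE big_cons.
case/orP=> [/eqP<-|/IH h]; first by rewrite Pi geq_minl.
case: (P a) => //; exact: leq_trans (geq_minr _ _) h.
Qed.

Lemma pick_sub (T : finType) (A : {set T}) m :
  m <= #|A| -> exists2 D : {set T}, D \subset A & #|D| = m.
Proof.
case/card_geqP=> s [us ss sA].
exists [set x in s].
  by apply/subsetP=> x; rewrite inE; apply: sA.
by rewrite cardsE (card_uniqP us).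
Qed.

Lemma transv (T : finType) (X F : {set T}) k :
  (2 * k).-1 <= #|X| ->
  (forall D : {set T}, D \subset X -> #|D| = k -> D :&: F != set0) ->
  k <= #|F :&: X|.
Proof.
move=> cX h; rewrite leqNgt; apply/negP=> lt.
have cI : #|X :&: F| <= #|X| by apply: subset_leq_card; apply: subsetIl.
have : k <= #|X :\: F|.
  rewrite cardsD setIC; move: cX lt cI; rewrite setIC; lia.
case/pick_sub=> D sD cD.
have := h D (subset_trans sD (subsetDl _ _)) cD.
apply/negP; rewrite negbK; apply/eqP/setP=> y; rewrite !inE.
apply/negP=> /andP[yD yF]; move/subsetP: sD => /(_ y yD); rewrite inE yF.
done.
Qed.

Definition kcodeg (T : finType) (k : nat) (AA : {set {set T}}) :=
  forall A, A \in AA -> forall x, x \in A -> k <= #|[set C in AA | A :\ x \subset C]|.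

Lemma exch (T : finType) k (AA : {set {set T}}) :
  0 < k -> (forall A, A \in AA -> #|A| = k) ->
  (forall A B, A \in AA -> B \in AA -> A :&: B != set0) -> kcodeg k AA ->
  forall P Q z q, P \in AA -> Q \in AA -> P :&: Q = [set z] -> q \in Q ->
  q |: (P :\ z) \in AA.
Proof.
move=> k0 hu hi hc P Q z q PA QA ePQ qQ.
have zP : z \in P by have := set11 z; rewrite -ePQ inE => /andP[].
set S := P :\ z.
have cS : #|P| = #|S|.+1 by rewrite (cardsD1 z P) zP.
suff : q |: S \in [set C in AA | S \subset C] by rewrite inE => /andP[].
apply: (@ext_full _ S Q) => //.
- move=> F; rewrite inE => /andP[FA sF]; split => //.
  by rewrite (hu F FA) -cS (hu P PA).
- move=> v vS; rewrite inE => /andP[vA _].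
  have := hi _ _ vA QA; case/set0Pn=> y; rewrite !inE => /andP[/orP[/eqP->|yS] yQ] //.
  move: yS; rewrite /S ?inE => /andP[yz yP].
  have : y \in P :&: Q by rewrite inE yP yQ.
  by rewrite ePQ inE (negbTE yz).
by rewrite (hu Q QA); apply: hc.
Qed.

Lemma step1 (T : finType) k (AA : {set {set T}}) :
  0 < k -> (forall A, A \in AA -> #|A| = k) ->
  (forall A B, A \in AA -> B \in AA -> A :&: B != set0) -> kcodeg k AA ->
  AA != set0 -> exists A, exists B, exists y,
    [/\ A \in AA, B \in AA & A :&: B = [set y]].
Proof.
move=> k0 hu hi hc /set0Pn[A0 A0A].
have p0 : (A0, A0) \in setX AA AA by rewrite inE /= A0A.
case: (arg_minnP (fun p : {set T} * {set T} => #|p.1 :&: p.2|) p0).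
case=> A B H1 hmin; have : (A, B) \in setX AA AA := H1.
rewrite inE /= => /andP[AA_A AA_B].
have hmin' : forall C D, C \in AA -> D \in AA -> #|A :&: B| <= #|C :&: D|.
  move=> C D CA DA; have h : (C, D) \in setX AA AA by rewrite inE /= CA DA.
  exact: (hmin (C, D) h).
have : 0 < #|A :&: B| by rewrite card_gt0; apply: hi.
rewrite leq_eqVlt => /orP[/eqP/esym/eqP/cards1P[y ey]|].
  by exists A, B, y.
case/card_gt1P=> x [y [xAB yAB xy]].
exfalso.
move: (xAB) (yAB); rewrite !inE => /andP[xA xB] /andP[yA yB].
set S := A :\ x.
have cS : #|A| = #|S|.+1 by rewrite (cardsD1 x A) xA.
have le1 : #|[set C in AA | S \subset C]| <= #|B :\: S|.
  apply: (@ext_le _ S).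
    move=> F; rewrite inE => /andP[FA sF]; split => //.
    by rewrite (hu F FA) -cS (hu A AA_A).
  move=> v vS; rewrite inE => /andP[vA _].
  rewrite inE vS /=; case: (boolP (v \in B)) => // vB; exfalso.
  have := hmin' _ _ vA AA_B.
  have e1 : (v |: S) :&: B \subset S :&: B.
    apply/subsetP=> w; rewrite !inE => /andP[/orP[/eqP->|->] wB] //.
    by rewrite (negbTE vB) in wB.
  have e2 : #|A :&: B| = #|S :&: B|.+1.
    rewrite (cardsD1 x (A :&: B)) xAB; congr (_.+1); apply: eq_card => w.
    by rewrite !inE andbA.
  move: (subset_leq_card e1); rewrite e2 => a b.
  by have := leq_trans b a; rewrite ltnn.
have le2 : #|B :\: S| < #|B|.
  apply: proper_card; rewrite properE subsetDl /=.
  apply/subsetPn; exists y => //; rewrite !inE yB andbT negbK.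
  by rewrite yA andbT; apply/eqP=> exy; rewrite exy eqxx in xy.
have := leq_trans (hc A AA_A x xA) le1; rewrite -/S (hu B AA_B) in le2.
by rewrite leqNgt le2.
Qed.

Lemma crux (T : finType) k (AA : {set {set T}}) :
  0 < k -> (forall A, A \in AA -> #|A| = k) ->
  (forall A B, A \in AA -> B \in AA -> A :&: B != set0) -> kcodeg k AA ->
  AA != set0 -> exists2 Y : {set T}, #|Y| = (2 * k).-1 &
    forall D : {set T}, D \subset Y -> #|D| = k -> D \in AA.
Proof.
move=> k0 hu hi hc ne.
have ex := exch k0 hu hi hc.
have [A [B [y [AA_A AA_B eAB]]]] := step1 k0 hu hi hc ne.
move eY : (A :|: B) => Y.
pose good P z := [&& P \in AA, z \in P, P \subset Y & z |: (Y :\: P) \in AA].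
have inter : forall (P : {set T}) (z : T), z \in P -> P :&: (z |: (Y :\: P)) = [set z].
  move=> P z zP; apply/setP=> w; rewrite !inE.
  case: (boolP (w == z)) => [/eqP->|_]; first by rewrite zP.
  by case: (w \in P).
have M1 : forall (P : {set T}) (z p : T), good P z -> p \in P -> good P p.
  move=> P z p /and4P[PA zP sPY QA] pP; apply/and4P; split => //.
  have h : (z |: (Y :\: P)) :&: P = [set z] by rewrite setIC inter.
  have := ex _ _ z p QA PA h pP.
  suff -> : (z |: (Y :\: P)) :\ z = Y :\: P by [].
  apply/setP=> w; rewrite !inE.
  by case: (boolP (w == z)) => [/eqP->|]; rewrite ?zP ?andbF.
have M2 : forall (P : {set T}) (z q : T), good P z -> q \in Y :\: P -> good (q |: (P :\ z)) q.
  move=> P z q /and4P[PA zP sPY QA] qYP.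
  have qQ : q \in z |: (Y :\: P) by rewrite inE qYP orbT.
  have P'A := ex _ _ _ q PA QA (inter _ _ zP) qQ.
  move: qYP; rewrite inE => /andP[qP qY].
  have zY : z \in Y by apply: (subsetP sPY).
  apply/and4P; split => //; rewrite ?inE ?eqxx //.
    apply/subsetP=> w; rewrite inE in_set1 => /orP[/eqP->//|]; rewrite inE => /andP[_ wP].
    exact: (subsetP sPY).
  suff -> : q |: (Y :\: (q |: P :\ z)) = z |: (Y :\: P) by [].
  apply/setP=> w; rewrite !inE.
  case: (boolP (w == q)) => [/eqP->|wq]; first by rewrite qY (negbTE qP) orbT.
  case: (boolP (w == z)) => [/eqP->|wz] /=; first by rewrite ?zY ?zP.
  by case: (w \in P); case: (w \in Y).
have main : forall d (P : {set T}) (z : T) (D : {set T}), good P z -> D \subset Y -> #|D| = k ->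
    #|D :\: P| = d -> D \in AA.
  elim=> [|d IH] P z D gP sDY cD.
    move/eqP; rewrite cards_eq0 setD_eq0 => sDP.
    have /and4P[PA zP _ _] := gP.
    have -> // : D = P.
    by apply/eqP; rewrite eqEcard sDP cD (hu P PA) leqnn.
  move=> cDP.
  have /set0Pn[q qDP] : D :\: P != set0 by rewrite -card_gt0 cDP.
  have /and4P[PA zP sPY _] := gP.
  have : 0 < #|P :\: D|.
    move: cDP; rewrite !cardsD (hu P PA) cD setIC => h.
    by rewrite subn_gt0 ltnNge; apply/negP=> le; move: h; rewrite (eqP le).
  case/card_gt0P=> p; rewrite inE => /andP[pD pP].
  have g1 := M1 _ _ _ gP pP.
  move: (qDP); rewrite inE => /andP[qP qD].
  have qYP : q \in Y :\: P by rewrite inE qP (subsetP sDY).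
  apply: (IH _ _ _ (M2 _ _ _ g1 qYP) sDY cD).
  have e : D :\: (q |: (P :\ p)) = (D :\: P) :\ q.
    apply/setP=> w; rewrite !inE.
    case: (boolP (w == q)) => //= wq.
    case: (boolP (w == p)) => [/eqP->|] /=; first by rewrite (negbTE pD) andbF.
    by [].
  by move: cDP; rewrite e (cardsD1 q (D :\: P)) qDP add1n => [[]].
exists Y.
  rewrite -eY cardsU (hu A AA_A) (hu B AA_B) eAB cards1.
  by rewrite mul2n -addnn subn1.
move=> D sDY cD.
have yA : y \in A by have := set11 y; rewrite -eAB inE => /andP[].
have gA : good A y.
  apply/and4P; split => //; first by rewrite -eY subsetUl.
  suff -> : y |: (Y :\: A) = B by [].
  apply/setP=> w; rewrite -eY !inE.
  case: (boolP (w == y)) => [/eqP->|wy] /=.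
    by have := set11 y; rewrite -eAB inE => /andP[].
  case: (boolP (w \in A)) => wA; case: (boolP (w \in B)) => wB //=.
  have : w \in A :&: B by rewrite inE wA wB.
  by rewrite eAB inE (negbTE wy).
exact: (main _ _ _ D gA sDY cD erefl).
Qed.

Definition hcodeg (T : finType) k (H : {set {set T}}) :=
  forall E, E \in H -> forall x, x \in E -> k <= #|[set F in H | E :\ x \subset F]|.

Lemma tau_ge (T : finType) r k (H : {set {set T}}) :
  (forall E, E \in H -> #|E| = r) -> hcodeg k H ->
  H != set0 -> forall X : {set T}, (forall F, F \in H -> X :&: F != set0) ->
  k <= #|X|.
Proof.
move=> hu hc /set0Pn[E0 E0H] X hX.
case: (arg_minnP (fun E : {set T} => #|E :&: X|) E0H) => E EH hmin.
have /set0Pn[x] := hX E EH; rewrite inE => /andP[xX xE].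
set S := E :\ x.
have cS : #|E| = #|S|.+1 by rewrite (cardsD1 x E) xE.
have le1 : #|[set C in H | S \subset C]| <= #|X|.
  apply: (@ext_le _ S).
    move=> F; rewrite inE => /andP[FA sF]; split => //.
    by rewrite (hu F FA) -cS (hu E EH).
  move=> v vS; rewrite inE => /andP[vH _]; case: (boolP (v \in X)) => // vX; exfalso.
  have := hmin _ vH.
  have e1 : (v |: S) :&: X \subset S :&: X.
    apply/subsetP=> w; rewrite !inE => /andP[/orP[/eqP->|->] wX] //.
    by rewrite (negbTE vX) in wX.
  have e2 : #|E :&: X| = #|S :&: X|.+1.
    rewrite (cardsD1 x (E :&: X)) inE xE xX; congr (_.+1); apply: eq_card => w.
    by rewrite !inE andbA.
  move: (subset_leq_card e1); rewrite e2 => a b.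
  by have := leq_trans b a; rewrite ltnn.
exact: leq_trans (hc E EH x xE) le1.
Qed.

Lemma branch (T : finType) (H GG : {set {set T}}) (S F : {set T}) :
  (forall G, G \in GG -> G :&: F != set0) ->
  #|[set G in GG | S \subset G]| <= \sum_(x in F) #|[set G in GG | x |: S \subset G]|.
Proof.
move=> hG; apply: leq_trans (card_bigcup_le _ _).
apply: subset_leq_card; apply/subsetP=> G; rewrite inE => /andP[GG_G sSG].
have /set0Pn[x] := hG G GG_G; rewrite inE => /andP[xG xF].
apply/bigcupP; exists x => //; rewrite inE GG_G /=.
by rewrite subUset sub1set xG.
Qed.

Lemma branch_iter (T : finType) r k (H GG : {set {set T}}) B :
  (forall E, E \in H -> #|E| = r) -> hcodeg k H -> H != set0 ->
  (forall G F, G \in GG -> F \in H -> G :&: F != set0) ->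
  (forall S : {set T}, #|S| = k -> #|[set G in GG | S \subset G]| <= B) ->
  forall j (S : {set T}), #|S| + j = k -> #|[set G in GG | S \subset G]| <= r ^ j * B.
Proof.
move=> hu hc ne hG hB; elim=> [|j IH] S cS.
  by rewrite expn0 mul1n; apply: hB; rewrite -cS addn0.
have : ~~ [forall F in H, S :&: F != set0].
  apply/negP=> /forallP hall.
  have := tau_ge hu hc ne (X := S).
  have h2 : forall F, F \in H -> S :&: F != set0 by move=> F FH; have := hall F; rewrite FH.
  move=> /(_ h2); rewrite -cS addnS => h3.
  by have := leq_trans h3 (leq_addr j _); rewrite ltnn.
case/forallPn=> F; rewrite negb_imply negbK => /andP[FH /eqP dSF].
apply: (leq_trans (branch H S (F := F) (fun G GG_G => hG G F GG_G FH))).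
apply: (@leq_trans (\sum_(x in F) r ^ j * B)).
  apply: leq_sum => x xF; apply: IH; rewrite cardsU1.
  have -> : x \notin S.
    apply/negP=> xS; have : x \in S :&: F by rewrite inE xS xF.
    by rewrite dSF inE.
  by rewrite add1n addSn -addnS.
by rewrite sum_nat_const (hu F FH) expnS mulnA.
Qed.

Lemma supersets (T : finType) (S : {set T}) r :
  #|S| <= r ->
  #|[set E : {set T} | (#|E| == r) && (S \subset E)]| = 'C(#|T| - #|S|, r - #|S|).
Proof.
move=> Sr.
have -> : [set E : {set T} | (#|E| == r) && (S \subset E)] =
  (fun D => D :|: S) @: [set D : {set T} | D \subset ~: S & #|D| == r - #|S|].
  apply/setP=> E; rewrite inE; apply/andP/imsetP.
    case=> /eqP cE sSE; exists (E :\: S).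
      rewrite inE subDset setUCr subsetT /= cardsD (setIidPr sSE) cE //.
    apply/setP=> y; rewrite !inE.
    by case: (boolP (y \in S)) => yS /=; [rewrite (subsetP sSE) // orbT | rewrite orbF].
  case=> D; rewrite inE => /andP[sD /eqP cD] ->; split; last exact: subsetUr.
  rewrite cardsU cD.
  have -> : D :&: S = set0.
    apply/setP=> y; rewrite !inE; apply/negP=> /andP[yD yS].
    by have := subsetP sD y yD; rewrite inE yS.
  by rewrite cards0 subn0 subnK.
rewrite card_in_imset; last first.
  move=> D1 D2; rewrite !inE => /andP[s1 _] /andP[s2 _] e.
  have dk : forall D : {set T}, D \subset ~: S -> (D :|: S) :\: S = D.
    move=> D sD; apply/setP=> y; rewrite !inE.
    case: (boolP (y \in S)) => yS /=; last by rewrite orbF.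
    by apply/esym/negP=> yD; have := subsetP sD y yD; rewrite inE yS.
  by rewrite -(dk _ s1) e dk.
by rewrite cards_draws cardsCs setCK.
Qed.

Definition Kset n r k (X : {set 'I_n}) :=
  [set E : {set 'I_n} | (#|E| == r) && (k <= #|E :&: X|)].

Lemma codeg_ge n (K : {set {set 'I_n}}) (S V : {set 'I_n}) :
  V \subset ~: S -> (forall v, v \in V -> v |: S \in K) -> #|V| <= codeg K S.
Proof.
move=> sV hV; rewrite /codeg.
rewrite -(@card_in_imset _ _ (fun v => v |: S)); last first.
  move=> v1 v2 v1V v2V e.
  have : v1 \in v2 |: S by rewrite -e setU11.
  rewrite !inE => /orP[/eqP//|v1S].
  by have := subsetP sV v1 v1V; rewrite inE v1S.
apply: subset_leq_card; apply/subsetP=> E /imsetP[v vV ->].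
by rewrite inE hV // subsetUr.
Qed.

Lemma K_codeg n r k (X S E : {set 'I_n}) :
  0 < k -> 0 < r -> #|X| = (2 * k).-1 -> r + k <= n.+1 ->
  E \in Kset r k X -> S \subset E -> #|S| = r.-1 -> k <= codeg (Kset r k X) S.
Proof.
move=> k0 r0 cX rkn; rewrite inE => /andP[/eqP cE kE] sSE cS.
have cE' : #|E| = #|S|.+1 by rewrite cE cS prednK.
have [v0 v0S eE] := one_more sSE cE'.
have cvS : forall v, v \notin S -> #|v |: S| = r by move=> v vS; rewrite cardsU1 vS cS add1n prednK.
case: (leqP k #|S :&: X|) => hSX.
  apply: leq_trans (codeg_ge (V := ~: S) _ _); first by rewrite cardsCs setCK card_ord cS; lia.
    by [].
  move=> v; rewrite inE => vS; rewrite inE cvS // eqxx /=.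
  apply: leq_trans hSX _; apply: subset_leq_card; apply: setSI; exact: subsetUr.
have e1 : #|E :&: X| <= #|S :&: X|.+1.
  rewrite eE setIUl; apply: leq_trans (leq_card_setU _ _) _.
  rewrite -add1n leq_add2r -(cards1 v0).
  by apply: subset_leq_card; apply: subsetIl.
have cSX : #|S :&: X| = k.-1 by move: e1 kE hSX; lia.
apply: leq_trans (codeg_ge (V := X :\: S) _ _).
  rewrite cardsD cX setIC cSX; lia.
  by apply/subsetP=> v; rewrite !inE => /andP[].
move=> v; rewrite inE => /andP[vS vX]; rewrite inE cvS // eqxx /=.
rewrite setIUl cardsU.
have -> : [set v] :&: X = [set v] by apply/setP=> w; rewrite !inE; case: (boolP (w == v)) => // /eqP->.
have -> : [set v] :&: (S :&: X) = set0.
  by apply/setP=> w; rewrite !inE; case: (boolP (w == v)) => // /eqP->; rewrite (negbTE vS).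
by rewrite cards1 cards0 subn0 cSX; lia.
Qed.

Lemma K_lower n r k (X : {set 'I_n}) :
  0 < k -> k <= r -> #|X| = (2 * k).-1 -> 'C(n - k, r - k) <= #|Kset r k X|.
Proof.
move=> k0 kr cX.
have [A0 sA0 cA0] : exists2 A0 : {set 'I_n}, A0 \subset X & #|A0| = k.
  by apply: pick_sub; rewrite cX; lia.
have := @supersets _ A0 r; rewrite cA0 card_ord => <- //.
apply: subset_leq_card; apply/subsetP=> E; rewrite !inE => /andP[-> sE] /=.
rewrite -cA0; apply: subset_leq_card; by rewrite subsetI sE.
Qed.

Lemma K_valid n r k (X : {set 'I_n}) :
  0 < k -> k <= r -> #|X| = (2 * k).-1 -> r + k <= n.+1 ->
  [/\ uniform r (Kset r k X), intersecting (Kset r k X) &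
      k <= min_pos_codeg r (Kset r k X)].
Proof.
move=> k0 kr cX rkn; split.
- by apply/forall_inP=> E; rewrite inE => /andP[].
- apply/forall_inP=> E; rewrite inE => /andP[_ kE]; apply/forall_inP=> F.
  rewrite inE => /andP[_ kF]; apply/set0Pn.
  have : (E :&: X) :&: (F :&: X) != set0.
    rewrite -card_gt0.
    have h := cardsU (E :&: X) (F :&: X).
    have h2 : #|(E :&: X) :|: (F :&: X)| <= #|X|.
      by apply: subset_leq_card; rewrite subUset !subsetIr.
    move: h h2 kE kF; rewrite cX; lia.
  case/set0Pn=> y; rewrite !inE => /andP[/andP[yE _] /andP[yF _]].
  by exists y; rewrite inE yE yF.
have lo := K_lower k0 kr cX.
have ne : Kset r k X != set0.
  rewrite -card_gt0; apply: leq_trans lo; rewrite bin_gt0; lia.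
have [E0 E0K] := set0Pn _ ne.
have r0 : 0 < r by lia.
have hS : forall S : {set 'I_n}, #|S| = r.-1 -> 0 < codeg (Kset r k X) S ->
    k <= codeg (Kset r k X) S.
  move=> S cS; rewrite card_gt0 => /set0Pn[E]; rewrite inE => /andP[EK sSE].
  exact: K_codeg k0 r0 cX rkn EK sSE cS.
rewrite /min_pos_codeg (negbTE ne).
apply: (big_ind (fun m => k <= m)).
- move: (E0K); rewrite inE => /andP[/eqP cE _].
  have : 0 < #|E0| by rewrite cE.
  case/card_gt0P=> x xE.
  have cS : #|E0 :\ x| = r.-1 by rewrite (cardsD1 x E0) xE add1n /= in cE; rewrite -cE.
  have sE : E0 :\ x \subset E0 by apply: subsetDl.
  apply: leq_trans (K_codeg k0 r0 cX rkn E0K sE cS) _.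
  by apply: subset_leq_card; apply/subsetP=> F; rewrite inE => /andP[].
- by move=> a b ka kb; rewrite leq_min ka kb.
- by move=> S /andP[/eqP cS pS]; apply: hS.
Qed.

Lemma gap (I : finType) (CC : {set I}) (t : I -> nat) (Tf : nat -> nat) :
  (forall j, Tf j <= Tf j.+1) ->
  exists2 i, i <= #|CC| & forall A, A \in CC -> ~~ ((Tf i < t A) && (t A <= Tf i.+1)).
Proof.
move=> mono.
have mono0 : forall j, Tf 0 <= Tf j.
  by elim=> // j IH; exact: leq_trans IH (mono j).
case: (boolP [exists i : 'I_(#|CC|.+1), [forall A in CC, ~~ ((Tf i < t A) && (t A <= Tf i.+1))]]).
  case/existsP=> i /forall_inP h; exists i => //; by rewrite -ltnS ltn_ord.
move/existsPn=> hall; exfalso.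
have key : forall m, m <= #|CC|.+1 -> m <= #|[set A in CC | (Tf 0 < t A) && (t A <= Tf m)]|.
  elim=> // m IH lt.
  have := hall (Ordinal lt); case/forallPn=> A; rewrite negb_imply negbK /= => /andP[AC /andP[a1 a2]].
  have IH' := IH (ltnW lt).
  apply: leq_trans (_ : #|A |: [set A in CC | (Tf 0 < t A) && (t A <= Tf m)]| <= _).
    rewrite cardsU1 inE AC /= (leqNgt _ (Tf m)) a1 andbF /= add1n ltnS //.
  apply: subset_leq_card; apply/subsetP=> B; rewrite !inE => /orP[/eqP->|].
    by rewrite AC a2 (leq_ltn_trans (mono0 m) a1).
  case/andP=> -> /andP[-> bm] /=; exact: leq_trans bm (mono m).
have := key _ (leqnn _).
have : #|[set A in CC | (Tf 0 < t A) && (t A <= Tf #|CC|.+1)]| <= #|CC|.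
  by apply: subset_leq_card; apply/subsetP=> B; rewrite inE => /andP[].
move=> a b; by have := leq_trans b a; rewrite ltnn.
Qed.

Lemma trace_eq (T : finType) (E W A : {set T}) x v :
  E :&: W = A -> (v |: (E :\ x)) :&: W = if v \in W then v |: (A :\ x) else A :\ x.
Proof.
move=> eA; have mA w : (w \in A) = (w \in E) && (w \in W) by rewrite -eA inE.
case: (boolP (v \in W)) => vW; apply/setP => w; rewrite !inE mA;
case: (boolP (w == v)) => [/eqP->|wv] /=; rewrite ?vW ?andbF ?andbT ?andbA //.
by rewrite (negbTE vW) !andbF.
Qed.
Lemma recover (T : finType) (E : {set T}) x v :
  x \in E -> v \notin E :\ x -> v != x -> x |: ((v |: (E :\ x)) :\ v) = E.
Proof.
move=> xE vE vx; apply/setP=> w; rewrite !inE.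
case: (boolP (w == x)) => [/eqP->|wx] /=; first by rewrite xE.
case: (boolP (w == v)) => [/eqP->|wv] /=; last by [].
by move: vE; rewrite !inE (negbTE vx) /= => /negbTE.
Qed.

Definition cls (T : finType) (H : {set {set T}}) (W A : {set T}) :=
  [set E in H | E :&: W == A].
Definition rest (T : finType) (H CC : {set {set T}}) (W : {set T}) :=
  [set E in H | E :&: W \notin CC].

Lemma cstep (T : finType) r k (H CC : {set {set T}}) (W : {set T}) (Th : nat) :
  (forall E, E \in H -> #|E| = r) -> hcodeg k H ->
  (forall A, A \in CC -> #|A| = k /\ A \subset W) ->
  forall A, A \in CC -> forall x, x \in A ->
  r * #|rest H CC W| + #|W| * Th < #|cls H W A| ->
  k <= #|[set B in [set A' in CC | Th < #|cls H W A'|] | A :\ x \subset B]|.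
Proof.
move=> hu hc hCC A AC x xA big.
set CCs := [set A' in CC | Th < #|cls H W A'|].
have [cA sAW] := hCC A AC.
have xW : x \in W by apply: (subsetP sAW).
have cAx : #|A :\ x| = k.-1 by rewrite (cardsD1 x A) xA add1n in cA; rewrite -cA.
have AxnC : A :\ x \notin CC.
  have k0 : 0 < k by rewrite -cA; apply/card_gt0P; exists x.
  apply/negP=> h; have [c _] := hCC _ h; move: c k0; rewrite cAx; clear -k; lia.
pose Bad := [set E in cls H W A | [exists v, [&& v \notin E :\ x, v |: (E :\ x) \in H &
    ~~ ((v == x) || ((v \in W) && (v |: (A :\ x) \in CCs)))]]].
pose U1 := \bigcup_(F in rest H CC W) [set x |: (F :\ v) | v in F].
pose U2 := \bigcup_(v in W) (if (v |: (A :\ x) \in CC) && ~~ (v |: (A :\ x) \in CCs)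
   then [set x |: (F :\ v) | F in cls H W (v |: (A :\ x))] else set0).
have cU1 : #|U1| <= r * #|rest H CC W|.
  apply: leq_trans (card_bigcup_le _ _) _.
  apply: (@leq_trans (\sum_(F in rest H CC W) r)); last by rewrite sum_nat_const mulnC.
  apply: leq_sum => F; rewrite inE => /andP[FH _]; rewrite -(hu F FH).
  exact: leq_imset_card.
have cU2 : #|U2| <= #|W| * Th.
  apply: leq_trans (card_bigcup_le _ _) _.
  apply: (@leq_trans (\sum_(v in W) Th)); last by rewrite sum_nat_const.
  apply: leq_sum => v _; case: ifP => [/andP[h1 h2]|]; last by rewrite cards0.
  apply: leq_trans (leq_imset_card _ _) _.
  by move: h2; rewrite inE h1 /= -leqNgt.
have sBad : Bad \subset U1 :|: U2.
  apply/subsetP=> E; rewrite !inE => /andP[/andP[EH /eqP eA] /existsP[v /and3P[vE FH nv]]].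
  have xE : x \in E by move: xA; rewrite -eA inE => /andP[].
  move: nv; rewrite negb_or => /andP[vx nv].
  have eE := recover xE vE vx.
  set F := v |: (E :\ x) in FH eE.
  have vF : v \in F by rewrite /F setU11.
  have tr := trace_eq x v eA; rewrite -/F in tr.
  case: (boolP (F :&: W \in CC)) => FWC; last first.
    apply/orP; left; apply/bigcupP; exists F; first by rewrite inE FH FWC.
    by apply/imsetP; exists v.
  case: (boolP (v \in W)) => vW; last by move: FWC; rewrite tr (negbTE vW) (negbTE AxnC).
  move: FWC nv; rewrite tr vW /= => FWC nv.
  apply/orP; right; apply/bigcupP; exists v => //; rewrite FWC nv /=.
  apply/imsetP; exists F => //; by rewrite inE FH tr vW eqxx.
have : ~~ (cls H W A \subset Bad).
  apply/negP=> s; have := subset_leq_card s.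
  have h1 := subset_leq_card sBad; have [h2 _] := leq_card_setU U1 U2.
  have := leq_trans (leq_trans (leq_trans (subset_leq_card s) h1) h2) (leq_add cU1 cU2).
  by rewrite leqNgt big.
case/subsetPn=> E EA EnB.
move: (EA); rewrite inE => /andP[EH /eqP eA].
have xE : x \in E by move: xA; rewrite -eA inE => /andP[].
have cEx : #|E| = #|E :\ x|.+1 by rewrite (cardsD1 x E) xE.
have hExt : forall F, F \in [set F in H | E :\ x \subset F] ->
    [/\ F :&: W \in CCs, A :\ x \subset F :&: W & F = (E :\ x) :|: (F :&: W)].
  move=> F; rewrite inE => /andP[FH sF].
  have [v vE eF] := one_more sF (etrans (hu F FH) (etrans (esym (hu E EH)) cEx)).
  have good : (v == x) || ((v \in W) && (v |: (A :\ x) \in CCs)).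
    apply/negPn/negP=> nb; move/negP: EnB; apply; rewrite inE EA /=.
    by apply/existsP; exists v; rewrite vE -eF FH nb.
  have vW : v \in W by case/orP: good => [/eqP->//|/andP[]].
  have vA : v |: (A :\ x) \in CCs.
    case/orP: good => [/eqP ev|/andP[]//]; rewrite ev setD1K //.
    rewrite inE AC /=; apply: leq_ltn_trans big; apply: leq_trans (leq_addl _ _).
    by apply: leq_pmull; apply/card_gt0P; exists x.
  have tr := trace_eq x v eA; rewrite -eF vW in tr.
  rewrite tr vA; split => //; first exact: subsetUr.
  rewrite -tr eF; apply/setP=> w; rewrite !inE.
  case: (boolP (w == v)) => [/eqP->|wv]; rewrite ?vW /= ?orbT //.
  by case: (_ && _).
apply: leq_trans (hc E EH x xE) _.
rewrite -(@card_in_imset _ _ (fun F => F :&: W)); last first.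
  move=> F1 F2 /hExt[_ _ e1] /hExt[_ _ e2] e.
  by rewrite e1 e2 e.
apply: subset_leq_card; apply/subsetP=> B /imsetP[F FE ->].
by have [h1 h2 _] := hExt F FE; rewrite inE h1 h2.
Qed.
Lemma tf_bound a b j : iter j (fun t => a + b * t + t) 0 <= a * (b + 2) ^ j.
Proof.
elim: j => // j IH; rewrite iterS.
have p : 0 < (b + 2) ^ j by rewrite expn_gt0 addn2.
rewrite expnS.
move: IH p; set T := iter _ _ _; set P := (b + 2) ^ j; nia.
Qed.

Definition Dc r k := (r ^ k * r + r ^ k * (k * r ^ k)) * (1 + r ^ k * r * (k * r ^ k + 2) ^ (r ^ k)).

Lemma exp_mono a b m p : a <= b -> m <= p -> (a + 2) ^ m <= (b + 2) ^ p.
Proof.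
move=> ab mp; apply: (@leq_trans ((b + 2) ^ m)).
  case: m {mp} => [//|m]; by rewrite leq_exp2r // leq_add2r.
by apply: leq_pexp2l; rewrite ?addn2.
Qed.

Lemma final_num n r k M N Hc R CCc Wc Ti :
  k < r -> r <= n -> N = 'C(n - k, r - k) -> M = 'C(n - k.+1, r - k.+1) -> N <= Hc ->
  Hc <= R + CCc * Ti -> Ti <= r * R * (Wc + 2) ^ CCc ->
  R <= r ^ k * (r * M) + CCc * (Wc * M) -> CCc <= r ^ k -> Wc <= k * CCc ->
  k + (r - k) * Dc r k < n -> False.
Proof.
move=> kr rn eN eM NH HR TB RB Cb Wb nb.
set c := r ^ k in Cb RB; set w := k * c.
have Ww : Wc <= w by apply: leq_trans Wb _; rewrite leq_mul2l Cb orbT.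
have e1 : (Wc + 2) ^ CCc <= (w + 2) ^ c by apply: exp_mono.
have R2 : R <= (c * r + c * w) * M.
  apply: leq_trans RB _; rewrite mulnDl mulnA leq_add2l -mulnA.
  by apply: leq_mul => //; apply: leq_mul.
have H2 : Hc <= R * (1 + c * r * (w + 2) ^ c).
  apply: leq_trans HR _; rewrite mulnDr muln1 leq_add2l.
  have h := leq_trans (leq_mul (leqnn CCc) TB) (leq_mul Cb (leq_mul (leqnn (r * R)) e1)).
  move: h; set P := (w + 2) ^ c; set Q := (Wc + 2) ^ CCc; clear; nia.
have H3 : Hc <= Dc r k * M.
  apply: leq_trans H2 _; rewrite /Dc -/c -/w.
  apply: leq_trans (leq_mul R2 (leqnn _)) _; by rewrite mulnAC.
have iden : (n - k) * M = (r - k) * N.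
  by rewrite eM eN !subnS mul_bin_diag prednK // subn_gt0.
have N0 : 0 < N by rewrite eN bin_gt0 leq_sub2r.
have M0 : 0 < M.
  rewrite lt0n; apply/negP=> /eqP M0; move: iden; rewrite M0 muln0 => /esym/eqP.
  by rewrite muln_eq0 subn_eq0 leqNgt kr /= eqn0Ngt N0.
have : (n - k) * M <= (r - k) * Dc r k * M.
  by rewrite iden -mulnA leq_mul2l (leq_trans NH H3) orbT.
rewrite leq_mul2r eqn0Ngt M0 /=.
move: nb; clear; lia.
Qed.

Lemma main_lt n r k (H : {set {set 'I_n}}) :
  0 < k -> k < r -> r + k <= n.+1 -> (2 * k).-1 <= n -> k + (r - k) * Dc r k < n ->
  (forall E, E \in H -> #|E| = r) ->
  (forall E F, E \in H -> F \in H -> E :&: F != set0) ->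
  hcodeg k H -> H != set0 ->
  (forall X : {set 'I_n}, #|X| = (2 * k).-1 -> #|Kset r k X| <= #|H|) ->
  kernel_system r k H.
Proof.
move=> k0 kr rkn kn nb hu hi hc ne hmax.
pose CC := [set A : {set 'I_n} | (#|A| == k) && [forall F in H, A :&: F != set0]].
have CCm : forall A F, A \in CC -> F \in H -> A :&: F != set0.
  by move=> A F; rewrite inE => /andP[_ /forall_inP h] FH; apply: h.
have CCk : forall A, A \in CC -> #|A| = k by move=> A; rewrite inE => /andP[/eqP].
have cCC : #|CC| <= r ^ k.
  have base : forall S : {set 'I_n}, #|S| = k -> #|[set G in CC | S \subset G]| <= 1.
    move=> S cS; rewrite -(cards1 S); apply: subset_leq_card; apply/subsetP=> G.
    rewrite inE => /andP[GC sSG]; rewrite inE; apply/eqP/esym/eqP.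
    by rewrite eqEcard sSG (CCk G GC) cS /=.
  have := @branch_iter _ r k H CC 1 hu hc ne CCm base k set0.
  rewrite cards0 add0n muln1 => /(_ erefl).
  have -> // : [set G in CC | set0 \subset G] = CC by apply/setP=> G; rewrite inE sub0set andbT.
pose M := 'C(n - k.+1, r - k.+1).
have degM : forall S : {set 'I_n}, #|S| = k.+1 -> #|[set E in H | S \subset E]| <= M.
  move=> S cS; have e := @supersets _ S r (etrans (f_equal (leq^~ r) cS) kr).
  rewrite card_ord cS in e; rewrite /M -e.
  apply: subset_leq_card; apply/subsetP=> E; rewrite !inE => /andP[EH ->].
  by rewrite (hu E EH) eqxx.
pose Hbad := [set E in H | [forall A in CC, ~~ (A \subset E)]].
have cHbad : #|Hbad| <= r ^ k * (r * M).
  have hG : forall G F, G \in Hbad -> F \in H -> G :&: F != set0.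
    by move=> G F; rewrite inE => /andP[GH _]; apply: hi.
  suff base : forall S : {set 'I_n}, #|S| = k -> #|[set G in Hbad | S \subset G]| <= r * M.
    have := @branch_iter _ r k H Hbad (r * M) hu hc ne hG base k set0.
    rewrite cards0 add0n => /(_ erefl).
    have -> // : [set G in Hbad | set0 \subset G] = Hbad by apply/setP=> G; rewrite inE sub0set andbT.
  move=> S cS.
  case: (boolP [forall F in H, S :&: F != set0]) => cov.
    have SC : S \in CC by rewrite inE cS eqxx cov.
    suff -> : [set G in Hbad | S \subset G] = set0 by rewrite cards0.
    apply/setP=> G; rewrite !inE.
    apply/negP=> /andP[/andP[_ /forall_inP h] sSG].
    by have := h S SC; rewrite sSG.
  case/forall_inPn: cov => F FH; rewrite negbK => /eqP dSF.
  apply: leq_trans (branch Hbad S (F := F) (fun G GG => hG G F GG FH)) _.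
  apply: (@leq_trans (\sum_(x in F) M)); last by rewrite sum_nat_const (hu F FH).
  apply: leq_sum => x xF.
  have xS : x \notin S.
    apply/negP=> xS; have : x \in S :&: F by rewrite inE xS xF.
    by rewrite dSF inE.
  apply: leq_trans (degM (x |: S) _); last by rewrite cardsU1 xS cS.
  apply: subset_leq_card; apply/subsetP=> G; rewrite !inE => /andP[/andP[-> _] ->].
  by [].
pose W := \bigcup_(A in CC) A.
have AW : forall A, A \in CC -> A \subset W by move=> A AiC; apply: bigcup_sup.
have cW : #|W| <= k * #|CC|.
  apply: leq_trans (card_bigcup_le _ _) _.
  rewrite (eq_bigr (fun _ => k)); first by rewrite sum_nat_const mulnC.
  by move=> A AiC; apply: CCk.
set R := #|rest H CC W|.
have cR : R <= r ^ k * (r * M) + #|CC| * (#|W| * M).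
  have s : rest H CC W \subset Hbad :|: \bigcup_(A in CC) \bigcup_(w in W :\: A)
      [set E in H | w |: A \subset E].
    apply/subsetP=> E; rewrite inE => /andP[EH EWn].
    case: (boolP (E \in Hbad)) => EB; first by rewrite inE EB.
    move: EB; rewrite inE EH /= => /forall_inPn[A AiC]; rewrite negbK => sAE.
    have sAEW : A \subset E :&: W by rewrite subsetI sAE AW.
    have : ~~ (E :&: W \subset A).
      apply/negP=> s2; have eA : E :&: W = A by apply/eqP; rewrite eqEsubset s2 sAEW.
      by rewrite eA AiC in EWn.
    case/subsetPn=> w; rewrite inE => /andP[wE wW] wA.
    rewrite inE; apply/orP; right; apply/bigcupP; exists A => //.
    apply/bigcupP; exists w; first by rewrite inE wA wW.
    by rewrite inE EH subUset sub1set wE sAE.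
  apply: leq_trans (subset_leq_card s) _.
  apply: leq_trans (leq_card_setU _ _) _; apply: leq_add => //.
  apply: leq_trans (card_bigcup_le _ _) _.
  rewrite -sum_nat_const; apply: leq_sum => A AiC.
  apply: leq_trans (card_bigcup_le _ _) _.
  apply: (@leq_trans (\sum_(w in W :\: A) M)).
    apply: leq_sum => w; rewrite inE => /andP[wA _].
    by apply: degM; rewrite cardsU1 wA CCk.
  rewrite sum_nat_const; apply: leq_mul => //.
  by apply: subset_leq_card; apply: subsetDl.
have cH : #|H| <= R + \sum_(A in CC) #|cls H W A|.
  have s : H \subset rest H CC W :|: \bigcup_(A in CC) cls H W A.
    apply/subsetP=> E EH; rewrite inE.
    case: (boolP (E :&: W \in CC)) => EC; last by rewrite inE EH EC.
    apply/orP; right; apply/bigcupP; exists (E :&: W) => //.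
    by rewrite inE EH eqxx.
  apply: leq_trans (subset_leq_card s) _.
  apply: leq_trans (leq_card_setU _ _) _; apply: leq_add => //.
  exact: card_bigcup_le.
pose Tf j := iter j (fun t => r * R + #|W| * t + t) 0.
have mono : forall j, Tf j <= Tf j.+1 by move=> j; rewrite /Tf iterS leq_addl.
have monoT : forall d a, Tf a <= Tf (a + d).
  elim=> [|d IH] a; first by rewrite addn0.
  by rewrite addnS; apply: leq_trans (IH a) (mono _).
have [i iC gp] := gap CC (fun A => #|cls H W A|) mono.
pose CCs := [set A in CC | Tf i < #|cls H W A|].
have bigA : forall A, A \in CCs -> r * R + #|W| * Tf i < #|cls H W A|.
  move=> A; rewrite inE => /andP[AiC lt]; have := gp A AiC; rewrite lt /= -ltnNge.
  by move=> h; apply: leq_ltn_trans h; rewrite /Tf /=; apply: leq_addr.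
have hCC : forall A, A \in CC -> #|A| = k /\ A \subset W.
  by move=> A AiC; split; [apply: CCk | apply: AW].
have kc : kcodeg k CCs.
  move=> A AiC x xA; have AiC' : A \in CC by move: AiC; rewrite inE => /andP[].
  exact: (cstep hu hc hCC AiC' xA (bigA A AiC)).
have CCsk : forall A, A \in CCs -> #|A| = k.
  by move=> A; rewrite inE => /andP[AiC _]; apply: CCk.
have CCsi : forall A B, A \in CCs -> B \in CCs -> A :&: B != set0.
  move=> A B; rewrite inE => /andP[AiC lt]; rewrite inE => /andP[BC _].
  have : 0 < #|cls H W A| by apply: leq_ltn_trans lt.
  case/card_gt0P=> E; rewrite inE => /andP[EH /eqP eA].
  have /set0Pn[y] := CCm B E BC EH; rewrite inE => /andP[yB yE].
  have yW : y \in W by apply: (subsetP (AW B BC)).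
  apply/set0Pn; exists y; rewrite inE yB andbT -eA inE yE yW //.
have CCsne : CCs != set0.
  apply/negP=> /eqP e0; exfalso.
  have small : forall A, A \in CC -> #|cls H W A| <= Tf #|CC|.
    move=> A AiC; rewrite leqNgt; apply/negP=> lt.
    have : A \in CCs.
      rewrite inE AiC /=; apply: leq_ltn_trans lt.
      by have := monoT (#|CC| - i) i; rewrite subnKC.
    by rewrite e0 inE.
  have sumb : \sum_(A in CC) #|cls H W A| <= #|CC| * Tf #|CC|.
    by rewrite -sum_nat_const; apply: leq_sum.
  have [X0 _ cX0] : exists2 X0 : {set 'I_n}, X0 \subset [set: 'I_n] & #|X0| = (2 * k).-1.
    by apply: pick_sub; rewrite cardsT card_ord.
  have NH := leq_trans (K_lower k0 (ltnW kr) cX0) (hmax X0 cX0).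
  apply: (@final_num n r k M _ #|H| R #|CC| #|W| (Tf #|CC|) kr _ erefl erefl NH) => //.
  - by move: rkn k0; clear; lia.
  - by apply: leq_trans cH _; rewrite leq_add2l.
  - exact: tf_bound.
have [X cX allX] := crux k0 CCsk CCsi kc CCsne.
have edge : forall F, F \in H -> k <= #|F :&: X|.
  move=> F FH; apply: transv; first by rewrite cX.
  move=> D sDX cD; have := allX D sDX cD; rewrite inE => /andP[DC _].
  exact: CCm.
exists X; split => //.
apply/eqP; rewrite eqEcard; apply/andP; split; last exact: hmax.
apply/subsetP=> E EH; rewrite inE (hu E EH) eqxx /=; exact: edge.
Qed.
Unset Implicit Arguments.
Set Strict Implicit.

Theorem theorem1 (r k : nat) :
  1 <= k -> k <= r ->
  exists n0 : nat, forall n : nat, n0 <= n ->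
    forall H : {set {set 'I_n}},
      uniform r H -> intersecting H -> k <= min_pos_codeg r H ->
      (forall H' : {set {set 'I_n}},
          uniform r H' -> intersecting H' -> k <= min_pos_codeg r H' ->
          #|H'| <= #|H|) ->
      kernel_system r k H.
Proof.
move=> k0 kr.
exists (r + 2 * k + (r - k) * Dc r k + 1).
move=> n hn H hU hI hM hmax.
have ne : H != set0.
  apply/negP=> /eqP e; move: hM; rewrite /min_pos_codeg e eqxx.
  by rewrite leqNgt k0.
have hu : forall E, E \in H -> #|E| = r.
  by move=> E EH; move/forall_inP: hU => /(_ E EH) /eqP.
have hi : forall E F, E \in H -> F \in H -> E :&: F != set0.
  by move=> E F EH FH; move/forall_inP: hI => /(_ E EH) /forall_inP /(_ F FH).
have hc : hcodeg k H.
  move=> E EH x xE; apply: leq_trans hM _.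
  rewrite /min_pos_codeg (negbTE ne).
  apply: (bigmin_le (P := fun S : {set 'I_n} => (#|S| == r.-1) && (0 < codeg H S))).
  have cEx : #|E :\ x| = r.-1 by move: (cardsD1 x E); rewrite xE (hu E EH) add1n => ->.
  apply/andP; split; first by rewrite cEx.
  by rewrite card_gt0; apply/set0Pn; exists E; rewrite inE EH subsetDl.
have hmaxK : forall X : {set 'I_n}, #|X| = (2 * k).-1 -> #|Kset r k X| <= #|H|.
  move=> X cX; have rkn : r + k <= n.+1 by move: hn; clear; lia.
  by have [u i m] := K_valid k0 kr cX rkn; apply: hmax.
case: (ltnP k r) => [lt|ge].
  apply: main_lt => //; move: hn; clear; lia.
have ekr : k = r by apply/eqP; rewrite eqn_leq kr ge.
subst k.
have [X cX allX] := crux k0 hu hi hc ne.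
exists X; split => //.
apply/setP=> E; rewrite inE; apply/idP/idP.
  move=> EH; rewrite (hu E EH) eqxx /=; apply: transv; first by rewrite cX.
  by move=> D sDX cD; apply: hi => //; apply: allX.
case/andP=> /eqP cE rE.
have eE : E :&: X = E.
  apply/eqP; rewrite eqEcard subsetIl cE rE andbT //.
apply: allX => //; by rewrite -eE subsetIr.
Qed.
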